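(* Let $G=(\mathcal V,\mathcal E,a)$ and $G'=(\mathcal V',\mathcal E',a')$ be finite undirected graphs with discrete node attributes. For any $u\in\mathcal V$, $u'\in\mathcal V'$ and any $k\ge0$ such that $\kappa^{(k)}_{\mathrm{walk}}(u,u)>0$ and $\kappa^{(k)}_{\mathrm{walk}}(u',u')>0$, $$d_{\kappa^{(k)}_{\mathrm{subtree}}}(u,u')\ \ge\ d_{\hat\kappa^{(k)}_{\mathrm{walk}}}(u,u').$$
   Context: $\mathcal N(u)$ denotes neighbors; $\delta$ is the Dirac kernel. Walks: $\mathcal W_k(G,u)$ is the set of sequences $(p_0=u,\dots,p_k)$ with consecutive nodes adjacent (repetitions allowed), $a(p)=(a(p_0),\dots,a(p_k))$. Walk kernel: $\kappa^{(k)}_{\mathrm{walk}}(u,u')=\sum_{p\in\mathcal W_k(G,u)}\sum_{p'\in\mathcal W_k(G',u')}\delta(a(p),a'(p'))$. The normalized kernel of $\kappa$ is $\hat\kappa(u,u')=\kappa(u,u')/\sqrt{\kappa(u,u)\kappa(u',u')}$. Weisfeiler–Lehman relabeling: $a_0=a$, $a_{i}(u)=f\big(a_{i-1}(u),\{\!\{a_{i-1}(v):v\in\mathcal N(u)\}\!\}\big)$ with $f$ injective and shared by both graphs; $\kappa^{(k)}_{\mathrm{subtree}}(u,u')=\delta(a_k(u),a'_k(u'))$. For a kernel $\kappa$, $d_\kappa(u,u')=\sqrt{\kappa(u,u)+\kappa(u',u')-2\kappa(u,u')}$ (the distance between feature-map images). *)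

(* Defs.v *)
From HB Require Import structures.
From mathcomp Require Import all_boot all_order all_algebra.
Set Implicit Arguments. Unset Strict Implicit. Unset Printing Implicit Defensive.
Import Order.TTheory GRing.Theory Num.Theory.
Local Open Scope ring_scope.

(* A finite undirected graph with discrete node attributes is given by a
   finite node type V, a symmetric adjacency relation E : rel V and an
   attribute map a : V -> L into a discrete (eqType) label set L. *)

Definition is_walk (V : finType) (E : rel V) (k : nat) (u : V)
  (p : k.+1.-tuple V) : bool :=
  (thead p == u) && path E (thead p) (behead p).

Definition walk_kernel (R : rcfType) (L : eqType)
  (V : finType) (E : rel V) (a : V -> L)
  (V' : finType) (E' : rel V') (a' : V' -> L)
  (k : nat) (u : V) (u' : V') : R :=
  \sum_(p : k.+1.-tuple V | is_walk E u p)
    \sum_(p' : k.+1.-tuple V' | is_walk E' u' p')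
       (map a p == map a' p')%:R.

Definition normalized_walk_kernel (R : rcfType) (L : eqType)
  (V : finType) (E : rel V) (a : V -> L)
  (V' : finType) (E' : rel V') (a' : V' -> L)
  (k : nat) (u : V) (u' : V') : R :=
  walk_kernel R E a E' a' k u u' / Num.sqrt (walk_kernel R E a E a k u u * walk_kernel R E' a' E' a' k u' u').

Definition nbrs (V : finType) (E : rel V) (u : V) : seq V :=
  [seq v <- enum V | E u v].

(* Weisfeiler-Lehman relabeling with a shared relabeling function
   f : L -> seq L -> L (the seq argument is the multiset of neighbor labels). *)
Fixpoint wl (L : eqType) (f : L -> seq L -> L)
  (V : finType) (E : rel V) (a : V -> L) (i : nat) (u : V) : L :=
  match i with
  | 0 => a u
  | i'.+1 => f (wl f E a i' u) [seq wl f E a i' v | v <- nbrs E u]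
  end.

Definition multiset_injective (L : eqType) (f : L -> seq L -> L) : Prop :=
  forall x y s t, f x s = f y t <-> (x = y /\ perm_eq s t).

Definition subtree_kernel (R : rcfType) (L : eqType) (f : L -> seq L -> L)
  (V : finType) (E : rel V) (a : V -> L)
  (V' : finType) (E' : rel V') (a' : V' -> L)
  (k : nat) (u : V) (u' : V') : R :=
  (wl f E a k u == wl f E' a' k u')%:R.

Definition kdist (R : rcfType) (kuu ku'u' kuu' : R) : R :=
  Num.sqrt (kuu + ku'u' - 2 * kuu').

(* Main.v *)
Require Import Defs.
From mathcomp Require Import all_boot all_order all_algebra.
From mathcomp Require Import lra.
Import Order.TTheory GRing.Theory Num.Theory.
Local Open Scope ring_scope.

Lemma thead_head (V : Type) n (t : n.+1.-tuple V) x0 : thead t = head x0 t.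
Proof. by rewrite /thead (tnth_nth x0); case: t => [[|y s]]. Qed.

Section Sums.
Variables (R : rcfType) (L : eqType) (V : finType) (E : rel V) (a : V -> L).

Definition S k u (F : seq L -> R) :=
  \sum_(p : k.+1.-tuple V | is_walk E u p) F (map a p).

Lemma S0 u F : S 0 u F = F [:: a u].
Proof.
rewrite /S (big_pred1 [tuple u]) //.
move=> p; rewrite /is_walk /=; case: p => [[|x [|y s]]] //= Hs.
Qed.

Lemma SS k u F : S k.+1 u F =
  \sum_(w <- nbrs E u) S k w (fun s => F (a u :: s)).
Proof.
rewrite /nbrs big_filter big_enum_cond /S.
under [in RHS]eq_bigl do rewrite inE /=.
rewrite (reindex (fun x : V * k.+1.-tuple V => [tuple of x.1 :: x.2])) /=; last first.
  exists (fun p : k.+2.-tuple V => (thead p, [tuple of behead p])).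
    by move=> [v q] _ /=; congr pair; apply: val_inj.
  by move=> p _; apply: val_inj => /=; case: p => [[|x s]].
rewrite -(pair_big_dep xpredT (fun (v : V) (q : k.+1.-tuple V) => is_walk E u [tuple of v :: q])
          (fun (v : V) (q : k.+1.-tuple V) => F (map a [tuple of v :: q]))) /=.
rewrite (bigD1 u) //= [X in _ + X]big1 ?addr0; last first.
  move=> v Hv; rewrite big_pred0 // => q; by rewrite /is_walk /= (negbTE Hv).
rewrite (partition_big (fun q : k.+1.-tuple V => thead q) (E u)) /=; last first.
  move=> q; rewrite /is_walk /= eqxx /=; case: q => [[|x s]] //= Hs.
  by rewrite !(thead_head _ _ _ x) /= => /andP[].
apply: eq_bigr => w Euw; apply: eq_bigl => q.
rewrite /is_walk /= eqxx /=; case: q => [[|x s]] //= Hs.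
rewrite !(thead_head _ _ _ x) /=.
by case: eqP => [->|]; rewrite ?Euw ?andbF ?andbT.
Qed.

End Sums.
Arguments S R {L V}.

Lemma sum_perm (K : rcfType) (A B C : eqType) (xs : seq A) (ys : seq B)
  (phi : A -> C) (psi : B -> C) (g : A -> K) (h : B -> K) :
  perm_eq (map phi xs) (map psi ys) ->
  (forall x y, phi x = psi y -> g x = h y) ->
  \sum_(x <- xs) g x = \sum_(y <- ys) h y.
Proof.
move=> + gh; elim: xs ys => [|x xs IH] ys Hp.
  by case: ys Hp => [_|y ys /perm_size] //; rewrite !big_nil.

have : phi x \in map psi ys by rewrite -(perm_mem Hp) mem_head.
case/mapP => y yin exy.
rewrite big_cons (perm_big _ (perm_to_rem yin)) big_cons (gh _ _ exy).
congr (_ + _); apply: IH.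
have := perm_map psi (perm_to_rem yin); rewrite /= => Hq.
have := perm_trans Hp Hq; by rewrite /= exy perm_cons.
Qed.

Section WL.
Variables (RR : rcfType) (L : eqType) (f : L -> seq L -> L)
  (hf : multiset_injective f)
  (V : finType) (E : rel V) (a : V -> L)
  (V' : finType) (E' : rel V') (a' : V' -> L).

Lemma wl_a k u u' : wl f E a k u = wl f E' a' k u' -> a u = a' u'.
Proof.
elim: k u u' => [|k IH] u u' //= /hf [] /IH //.
Qed.

Lemma wl_S k : forall u u', wl f E a k u = wl f E' a' k u' ->
  forall F, S RR E a k u F = S RR E' a' k u' F.
Proof.
elim: k => [|k IH] u u' H F.
  by rewrite !S0 (wl_a _ _ _ H).
rewrite !SS -(wl_a _ _ _ H).
move: H => /= /hf [_ Hp].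
apply: (@sum_perm _ _ _ _ _ _ _ _ (fun w => S RR E a k w (fun s => F (a u :: s))) (fun w => S RR E' a' k w (fun s => F (a u :: s))) Hp).
by move=> x y /IH.
Qed.
End WL.
Arguments wl_S RR {L f} hf {V E a V' E' a' k u u'} H F.

Lemma norm1 (R : rcfType) (x : R) : 0 < x -> x / Num.sqrt (x * x) = 1.
Proof. by move=> hx; rewrite -expr2 sqrtr_sqr gtr0_norm // divff // gt_eqF. Qed.

Theorem corollary1 (R : rcfType) (L : eqType) (f : L -> seq L -> L)
  (hf : multiset_injective f)
  (V : finType) (E : rel V) (a : V -> L) (hE : symmetric E)
  (V' : finType) (E' : rel V') (a' : V' -> L) (hE' : symmetric E')
  (u : V) (u' : V') (k : nat)
  (hu : 0 < walk_kernel R E a E a k u u)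
  (hu' : 0 < walk_kernel R E' a' E' a' k u' u') :
  kdist (subtree_kernel R f E a E a k u u)
        (subtree_kernel R f E' a' E' a' k u' u')
        (subtree_kernel R f E a E' a' k u u')
  >= kdist (normalized_walk_kernel R E a E a k u u)
           (normalized_walk_kernel R E' a' E' a' k u' u')
           (normalized_walk_kernel R E a E' a' k u u').
Proof.
rewrite /kdist /subtree_kernel /normalized_walk_kernel !eqxx !norm1 //.
case: eqP => H.
  have e1 : walk_kernel R E a E a k u u = walk_kernel R E a E' a' k u u'.
    rewrite /walk_kernel; apply: eq_bigr => p _.
    exact: (wl_S R hf H (fun s' => (map a p == s')%:R)).
  have e2 : walk_kernel R E' a' E' a' k u' u' = walk_kernel R E a E' a' k u u'.
    exact: (wl_S R hf (esym H) (fun s => S R E' a' k u' (fun s' => (s == s')%:R))).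
  by rewrite -e2 e2 -e1 norm1.
have K0 : 0 <= walk_kernel R E a E' a' k u u'.
  by apply: sumr_ge0 => p _; apply: sumr_ge0 => q _; apply: ler0n.
rewrite ler_sqrt; last by rewrite /=; lra.
have : 0 <= walk_kernel R E a E' a' k u u' /
   Num.sqrt (walk_kernel R E a E a k u u * walk_kernel R E' a' E' a' k u' u').
  by rewrite divr_ge0 // sqrtr_ge0.
rewrite /=; lra.
Qed.
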